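(* Let $G$ be a simple plane graph all of whose faces, including the outer face, are triangles, and let $\Delta(G)$ be its maximum degree. Then $\lambda(G)\ge-\Delta(G)/2$. If moreover $G$ is $k$-regular and $\chi(G)=3$, then $\lambda(G)=-k/2$.
   Context: $\lambda(G)$ is the smallest adjacency eigenvalue and $\chi(G)$ the chromatic number. *)

(* Defs.v *)
From HB Require Import structures.
From mathcomp Require Import all_boot all_order all_algebra all_field.
Set Implicit Arguments. Unset Strict Implicit. Unset Printing Implicit Defensive.
Import Order.TTheory GRing.Theory Num.Theory.

Section Graphs.
Variable T : finType.
Implicit Type e : rel T.

Definition deg e (v : T) : nat := #|[pred w | e v w]|.
Definition max_deg e : nat := \max_(v : T) deg e v.

(* Combinatorial embedding (rotation system): rho u is a cyclic permutation of
   the neighbourhood of u (the clockwise successor of a neighbour around u). *)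
Definition rotation e (rho : T -> T -> T) : Prop :=
  [/\ forall u v, e u v -> e u (rho u v),
      forall u v w, e u v -> e u w -> rho u v = rho u w -> v = w
    & forall u v w, e u v -> e u w -> fconnect (rho u) v w].

Definition face_map (rho : T -> T -> T) (d : T * T) : T * T := (d.2, rho d.2 d.1).

Definition darts e : {pred T * T} := [pred d : T * T | e d.1 d.2].
Definition num_edges e : nat := #|darts e| %/ 2.
Definition num_faces e (rho : T -> T -> T) : nat := fcard (face_map rho) (darts e).

(* A simple plane graph all of whose faces (including the outer one) are
   triangles: a connected simple graph with a rotation system of genus 0
   (Euler: V - E + F = 2) in which every face has boundary length 3. *)
Definition plane_triangulation e : Prop :=
  [/\ symmetric e, irreflexive e, (forall x y, connect e x y) &
   exists rho, [/\ rotation e rho,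
                   #|T| + num_faces e rho = num_edges e + 2
                 & forall d, d \in darts e -> iter 3 (face_map rho) d = d]].

Definition adjmx e : 'M[algC]_#|T| :=
  \matrix_(i, j) ((e (enum_val i) (enum_val j))%:R)%R.

Definition is_min_eigenvalue n (A : 'M[algC]_n) (l : algC) : Prop :=
  eigenvalue A l /\ forall m, eigenvalue A m -> (l <= m)%R.

Definition colorable e (k : nat) : bool :=
  [exists c : {ffun T -> 'I_k}, [forall x, forall y, e x y ==> (c x != c y)]].

Definition chromatic_number e (k : nat) : Prop :=
  colorable e k /\ forall j, colorable e j -> k <= j.

End Graphs.

(* Main.v *)
Require Import Defs.
From HB Require Import structures.
From mathcomp Require Import all_boot all_order all_algebra all_field.
From mathcomp Require Import ring.
Import Order.TTheory GRing.Theory Num.Theory.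
Local Open Scope ring_scope.
Set Implicit Arguments. Unset Strict Implicit.

Definition Dset (T : finType) (e : rel T) := [set d : T * T | e d.1 d.2].

Definition tri_hyp (T : finType) (e : rel T) rho :=
  [/\ symmetric e, rotation e rho &
      forall d, d \in darts e -> iter 3 (face_map rho) d = d].

Lemma f_in (T : finType) (e : rel T) rho : tri_hyp e rho ->
  forall d, d \in Dset e -> face_map rho d \in Dset e.
Proof.
case=> sym [r1 r2 r3] _ [u v]; rewrite !inE /= => huv.
by apply: r1; rewrite sym.
Qed.

Lemma f3 (T : finType) (e : rel T) rho : tri_hyp e rho ->
  forall d, d \in Dset e -> face_map rho (face_map rho (face_map rho d)) = d.
Proof. by case=> _ _ h3 d hd; apply: (h3 d); rewrite inE; rewrite inE in hd. Qed.

Lemma sum_f (T : finType) (e : rel T) rho (g : T * T -> algC) : tri_hyp e rho ->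
  \sum_(d in Dset e) g (face_map rho d) = \sum_(d in Dset e) g d.
Proof.
move=> H.
have im : [set face_map rho d | d in Dset e] = Dset e.
  apply/setP => d; apply/imsetP/idP.
    by case=> d' hd' ->; apply: f_in.
  move=> hd; exists (face_map rho (face_map rho d)).
    by do 2 apply: (f_in H).
  by rewrite (f3 H).
rewrite -{2}im big_imset //.
move=> x y hx hy hxy.
by rewrite -(f3 H hx) -(f3 H hy) hxy.
Qed.


Lemma key (T : finType) (e : rel T) rho (x : T -> algC) : tri_hyp e rho ->
  0 <= \sum_(d in Dset e) x d.2 * (x d.2)^* +
       \sum_(d in Dset e) (x d.1 * (x d.2)^* + x d.2 * (x d.1)^*).
Proof.
move=> H.
set R := fun d : T * T => x d.2 * (x d.2)^*.
set P := fun d : T * T => x d.1 * (x d.2)^* + x d.2 * (x d.1)^*.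
set f := face_map rho.
have pw : forall d, d \in Dset e ->
  (x d.1 + x d.2 + x (f d).2) * (x d.1 + x d.2 + x (f d).2)^* =
  R d + R (f d) + R (f (f d)) + (P d + P (f d) + P (f (f d))).
  move=> d hd.
  have hu : d.1 = (f (f d)).2 by rewrite -{1}(f3 H hd).
  rewrite /R /P.
  have -> : (f (f d)).1 = (f d).2 by [].
  have -> : (f d).1 = d.2 by [].
  rewrite -hu !rmorphD /=.
  ring.
have : 0 <= \sum_(d in Dset e) (x d.1 + x d.2 + x (f d).2) * (x d.1 + x d.2 + x (f d).2)^*.
  by apply: sumr_ge0 => d _; exact: mul_conjC_ge0.
rewrite (eq_bigr _ pw).
suff: 0 <= \sum_(d in Dset e) (R d + R (f d) + R (f (f d)) + (P d + P (f d) + P (f (f d)))) ->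
  0 <= \sum_(d in Dset e) R d + \sum_(d in Dset e) P d by [].
clearbody R P.
rewrite !big_split.
rewrite (sum_f (fun d => R (f d)) H) (sum_f (fun d => P (f d)) H) !(sum_f _ H).
set a := \sum_(i in _) R i; set b := \sum_(i in _) P i.
rewrite /=.
have -> : a + a + a + (b + b + b) = (a + b) *+ 3.
  rewrite !mulrS mulr0n !addr0.
  ring.
by rewrite pmulrn_lge0.
Qed.

Lemma dsum (T : finType) (e : rel T) (F : T -> T -> algC) :
  \sum_(d in Dset e) F d.1 d.2 = \sum_t \sum_s (e t s)%:R * F t s.
Proof.
rewrite pair_big /= big_mkcond; apply: eq_bigr => [[t s]] _; rewrite inE /=.
by case: (e t s); rewrite ?mul1r ?mul0r.
Qed.

Lemma degsum (T : finType) (e : rel T) s : symmetric e ->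
  \sum_t (e t s)%:R = (deg e s)%:R :> algC.
Proof.
move=> sym; rewrite /deg -sum1_card natr_sum [RHS]big_mkcond; apply: eq_bigr => t _.
by rewrite inE /= sym; case: (e s t).
Qed.

Lemma deg_max (T : finType) (e : rel T) s : (deg e s <= max_deg e)%N.
Proof. exact: leq_bigmax. Qed.

Lemma eig_bound (T : finType) (e : rel T) rho (x : T -> algC) (a : algC) :
  tri_hyp e rho -> (forall s, \sum_t x t * (e t s)%:R = a * x s) ->
  (exists t, x t != 0) ->
  a \is Num.real /\ - ((max_deg e)%:R / 2) <= a.
Proof.
move=> H hx [t0 ht0].
have sym : symmetric e by case: H.
set N := \sum_t x t * (x t)^*.
have Npos : 0 < N.
  rewrite /N (bigD1 t0) //=; apply: ltr_wpDr.
    by apply: sumr_ge0 => t _; exact: mul_conjC_ge0.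
  by rewrite mul_conjC_gt0.
have Q1 : \sum_(d in Dset e) x d.1 * (x d.2)^* = a * N.
  rewrite (dsum e (fun t s => x t * (x s)^*)) exchange_big /N mulr_sumr.
  apply: eq_bigr => s _; rewrite mulrA -hx mulr_suml.
  by apply: eq_bigr => t _; rewrite mulrCA mulrA mulrC.
have Q2 : \sum_(d in Dset e) x d.2 * (x d.1)^* = a * N.
  rewrite (dsum e (fun t s => x s * (x t)^*)) /N mulr_sumr.
  apply: eq_bigr => t _; rewrite mulrA -hx mulr_suml.
  by apply: eq_bigr => s _; rewrite sym mulrCA mulrA mulrC.
have Rb : \sum_(d in Dset e) x d.2 * (x d.2)^* <= (max_deg e)%:R * N.
  rewrite (dsum e (fun t s => x s * (x s)^*)) exchange_big /N mulr_sumr.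
  apply: ler_sum => s _; rewrite -mulr_suml degsum // mulrA.
  rewrite -mulrA; apply: ler_wpM2r; [exact: mul_conjC_ge0 | by rewrite ler_nat deg_max].
have Q12 : (a * N)^* = a * N.
  rewrite -{1}Q1 -Q2 rmorph_sum; apply: eq_bigr => d _.
  by rewrite rmorphM /= conjCK mulrC.
have Nr : N^* = N by apply: conj_Creal; apply: ger0_real; apply: ltW.
have ar : a^* = a.
  move: Q12; rewrite rmorphM /= Nr => /(mulIf _); apply; exact: lt0r_neq0.
split; first by rewrite CrealE ar.
have := key x H; rewrite big_split /= Q1 Q2 => h.
have h2 : 0 <= ((max_deg e)%:R + a * 2) * N.
  apply: le_trans h _.
  have -> : ((max_deg e)%:R + a * 2) * N = (max_deg e)%:R * N + (a * N + a * N) by ring.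
  by rewrite lerD2r.
rewrite pmulr_lge0 // in h2.
rewrite -subr_ge0 opprK -(pmulr_lge0 _ (ltr0n _ 2)) mulrDl divfK ?pnatr_eq0 //.
by rewrite addrC.
Qed.

Lemma sum_ord (T : finType) (G : T -> algC) :
  \sum_(i < #|T|) G (enum_val i) = \sum_t G t.
Proof.
rewrite (reindex enum_rank) /=; last by apply: onW_bij; exact: enum_rank_bij.
by apply: eq_bigr => t _; rewrite enum_rankK.
Qed.

Lemma eig_to_vec (T : finType) (e : rel T) (m : algC) :
  eigenvalue (adjmx e) m ->
  exists x : T -> algC, (forall s, \sum_t x t * (e t s)%:R = m * x s) /\
                        exists t, x t != 0.
Proof.
move=> /eigenvalueP [v hv vn0].
exists (fun t => v 0 (enum_rank t)); split.
  move=> s; have := congr1 (fun M : 'rV[algC]_#|T| => M ord0 (enum_rank s)) hv; rewrite /= !mxE => <-.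
  rewrite -sum_ord; apply: eq_bigr => i _; rewrite enum_valK /adjmx mxE enum_rankK.
  done.
apply/existsP; rewrite -negb_forall; apply: contra vn0 => /forallP h.
apply/eqP/rowP => j; rewrite !mxE; have := h (enum_val j); rewrite enum_valK.
by move/eqP.
Qed.

Lemma vec_to_eig (T : finType) (e : rel T) (m : algC) (x : T -> algC) :
  (forall s, \sum_t x t * (e t s)%:R = m * x s) -> (exists t, x t != 0) ->
  eigenvalue (adjmx e) m.
Proof.
move=> hx [t0 ht0]; apply/eigenvalueP.
exists (\row_i x (enum_val i)).
  apply/rowP => j; rewrite !mxE -hx -[RHS]sum_ord; apply: eq_bigr => i _.
  by rewrite !mxE.
apply: contra ht0 => /eqP /rowP /(_ (enum_rank t0)); rewrite !mxE enum_rankK => ->.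
by [].
Qed.

Lemma I3 : forall p q r z : 'I_3, p != q -> q != r -> p != r -> z != p -> z != q -> z == r.
Proof. by move=> [[|[|[|//]]] ?] [[|[|[|//]]] ?] [[|[|[|//]]] ?] [[|[|[|//]]] ?]. Qed.

Lemma cardsum (T : finType) (P : pred T) : \sum_t (P t)%:R = #|P|%:R :> algC.
Proof.
rewrite -sum1_card natr_sum [RHS]big_mkcond; apply: eq_bigr => t _.
by rewrite unfold_in; case: (P t).
Qed.

Lemma rho_nbr (T : finType) (e : rel T) rho s t : tri_hyp e rho -> e s t ->
  e s (rho s t) /\ e t (rho s t).
Proof.
move=> H hst; have sym : symmetric e by case: H.
have hd : (t, s) \in Dset e by rewrite inE /= sym.
have h1 := f_in H hd; have h2 := f_in H h1; have h3 := f3 H hd.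
rewrite inE /= in h1; split => //.
rewrite inE /= in h2.
move: h3; rewrite /face_map /= => -[] h4 _.
by rewrite sym -{2}h4.
Qed.

Lemma col_eig (T : finType) (e : rel T) rho (c : T -> 'I_3) t0 (k : nat) :
  tri_hyp e rho -> (forall v, deg e v = k) ->
  (forall x y, e x y -> c x != c y) ->
  forall s, \sum_t (if c t == c t0 then 2 else -1 : algC) * (e t s)%:R =
            - (k%:R / 2) * (if c s == c t0 then 2 else -1).
Proof.
move=> H hk hc s.
have sym : symmetric e by case: H.
set A := [pred t | e s t && (c t == c t0)].
set B := [pred t | e s t && (c t != c t0)].
have AB : (#|A| + #|B| = k)%N.
  rewrite -(hk s) /deg -(cardID (fun t => c t == c t0) [pred w | e s w]).
  congr (_ + _)%N; apply: eq_card => t; rewrite !inE /=.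
  by rewrite unfold_in andbC.
have -> : \sum_t (if c t == c t0 then 2 else -1 : algC) * (e t s)%:R =
          2 * #|A|%:R - #|B|%:R.
  rewrite -!cardsum mulr_sumr -sumrB; apply: eq_bigr => t _.
  rewrite /A /B /= sym; case: (e s t); case: (c t == c t0) => /=;
    rewrite ?mulr1 ?mulr0 ?subr0 ?sub0r //.
have two : (2 : algC) != 0 by rewrite pnatr_eq0.
case: eqP => hs.
  have A0 : #|A| = 0%N.
    apply: eq_card0 => t; rewrite !inE; apply/negP => /andP [hst /eqP ht].
    by move: (hc _ _ hst); rewrite ht hs eqxx.
  move: AB; rewrite A0 add0n => <-.
  by rewrite mulr0 sub0r mulNr divfK.
have [g1 g2] : (forall t, t \in A -> rho s t \in B) /\
               (forall t, t \in B -> rho s t \in A).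
  split=> t; rewrite !inE => /andP [hst ht];
    have [h1 h2] := rho_nbr H hst; rewrite h1 /=.
    by move/eqP: ht => <-; rewrite eq_sym; apply: hc.
  apply: (I3 (p := c s) (q := c t)).
  - by apply: hc.
  - by rewrite ht.
  - by apply/eqP.
  - by rewrite eq_sym; apply: hc.
  - by rewrite eq_sym; apply: hc.
have inj : {in [pred t | e s t] &, injective (rho s)}.
  by case: H => _ [_ r2 _] _ u v hu hv; apply: r2.
have le1 : (#|A| <= #|B|)%N.
  rewrite -(@card_in_imset _ _ (rho s) A); last first.
    by move=> u v; rewrite !inE => /andP [hu _] /andP [hv _]; apply: inj.
  apply: subset_leq_card; apply/subsetP => u /imsetP [t ht ->]; exact: g1.
have le2 : (#|B| <= #|A|)%N.
  rewrite -(@card_in_imset _ _ (rho s) B); last first.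
    by move=> u v; rewrite !inE => /andP [hu _] /andP [hv _]; apply: inj.
  apply: subset_leq_card; apply/subsetP => u /imsetP [t ht ->]; exact: g2.
have eAB : #|A| = #|B| by apply/eqP; rewrite eqn_leq le1 le2.
move: AB; rewrite -eAB => <-.
have h2 : forall z : algC, 2 * z - z = (z + z) / 2 by move=> z; field.
by rewrite mulrN1 opprK natrD h2.
Qed.

Lemma seq_min (r : seq algC) : r != [::] -> {in r, forall z, z \is Num.real} ->
  exists2 m, m \in r & forall z, z \in r -> m <= z.
Proof.
elim: r => [//|a r IH] _ hr.
have ar : a \is Num.real by apply: hr; rewrite mem_head.
case: (eqVneq r [::]) => [-> | rn0].
  by exists a; rewrite ?mem_head // => z; rewrite inE => /eqP ->.
have [m mr mmin] : exists2 m, m \in r & forall z, z \in r -> m <= z.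
  by apply: IH => // z hz; apply: hr; rewrite inE hz orbT.
have mre : m \is Num.real by apply: hr; rewrite inE mr orbT.
case/orP: (real_leVge ar mre) => h.
  exists a; first by rewrite mem_head.
  move=> z; rewrite inE => /orP [/eqP -> // | /mmin]; exact: le_trans h.
exists m; first by rewrite inE mr orbT.
by move=> z; rewrite inE => /orP [/eqP -> // | /mmin].
Qed.

Theorem mainTheorem16 (T : finType) (e : rel T) :
  plane_triangulation e ->
  (exists l : algC, is_min_eigenvalue (adjmx e) l /\ - ((max_deg e)%:R / 2) <= l) /\
  (forall k : nat, (forall v, deg e v = k) -> chromatic_number e 3 ->
     is_min_eigenvalue (adjmx e) (- (k%:R / 2))).
Proof.
move=> [sym irr conn [rho [rot euler tri]]].
have H : tri_hyp e rho by split.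
have [t0 _] : exists t0 : T, True.
  case: (pickP (@predT T)) => [t0 _ | hT]; first by exists t0.
  exfalso; move: euler.
  have c0 : forall A : {pred T * T}, #|A| = 0%N.
    by move=> A; apply: eq_card0 => d; have := hT d.1.
  have cT : #|T| = 0%N by apply: eq_card0 => t; have := hT t.
  by rewrite /num_faces /n_comp_mem /num_edges !c0 cT.
split.
  have [r hr] := closed_field_poly_normal (char_poly (adjmx e)).
  have mon := char_poly_monic (adjmx e).
  rewrite (monicP mon) scale1r in hr.
  have eigr : forall z, eigenvalue (adjmx e) z = (z \in r).
    by move=> z; rewrite eigenvalue_root_char hr root_prod_XsubC.
  have rn0 : r != [::].
    apply/eqP => r0; have := size_char_poly (adjmx e).
    rewrite hr r0 big_nil size_poly1 => h.
    by have := card0_eq (esym (succn_inj h)) t0; rewrite inE.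
  have rreal : {in r, forall z, z \is Num.real}.
    move=> z; rewrite -eigr => /eig_to_vec [x [hx hnz]].
    exact: (eig_bound H hx hnz).1.
  have [m mr mmin] := seq_min rn0 rreal.
  exists m; split.
    split; first by rewrite eigr.
    by move=> z; rewrite eigr; exact: mmin.
  have : eigenvalue (adjmx e) m by rewrite eigr.
  move/eig_to_vec => [x [hx hnz]].
  exact: (eig_bound H hx hnz).2.
move=> k hk [col _].
have [c /forallP hc] := existsP col.
have hc' : forall x y, e x y -> c x != c y.
  by move=> x y hxy; move: (hc x) => /forallP /(_ y); rewrite hxy.
have Dk : max_deg e = k.
  apply/eqP; rewrite eqn_leq; apply/andP; split.
    by apply/bigmax_leqP => v _; rewrite hk.
  by rewrite -(hk t0) deg_max.
split.
  apply: (vec_to_eig (x := fun t => if c t == c t0 then 2 else -1)).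
    by move=> s /=; rewrite (col_eig t0 H hk hc').
  by exists t0; rewrite eqxx pnatr_eq0.
move=> m /eig_to_vec [x [hx hnz]].
by have := (eig_bound H hx hnz).2; rewrite Dk.
Qed.
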